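(* Let $\Sigma$ be a finite alphabet with $|\Sigma|\ge2$, $n\ge1$, and $\rho_1,\rho_2,\rho_3>0$ with $\rho_1+\rho_2+\rho_3\le1$. For $0<\varepsilon<1$, the $\varepsilon$-mixing time $\tau(\varepsilon)$ of the lazy Markov chain $L^{\mathfrak{A}(n)}_{\rho_1,\rho_2,\rho_3}$ satisfies $$\tau(\varepsilon)\le\max\left(\left\lceil\frac{n}{\rho_1}\Big(\log n+\log\frac{1}{\rho_1\varepsilon}\Big)\right\rceil,\ \left\lceil\frac{n}{\rho_2}\Big(\log n+\log\frac{1}{\rho_2\varepsilon}\Big)\right\rceil,\ \left\lceil\frac{|\Sigma|n^2}{\rho_3}\Big(\log(|\Sigma|n^2)+\log\frac{1}{\rho_3\varepsilon}\Big)\right\rceil\right).$$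
   Context: A non-deterministic automaton (NFA) over $\Sigma$ is a tuple $(Q,\Sigma,\Delta,I,F)$ with $Q$ a finite set of states, $\Delta\subseteq Q\times\Sigma\times Q$, $I,F\subseteq Q$. $\mathfrak{A}(n)$ is the set of all NFAs over $\Sigma$ with state set $Q=\{1,\dots,n\}$. For $\mathcal{A}\in\mathfrak{A}(n)$: $\mathsf{Ch_{init}}(\mathcal{A},q)$ toggles membership of $q$ in $I$; $\mathsf{Ch_{final}}(\mathcal{A},q)$ toggles membership of $q$ in $F$; $\mathsf{Ch_{trans}}(\mathcal{A},(p,a,q))$ toggles membership of $(p,a,q)$ in $\Delta$. The matrix $S=S^{\mathfrak{A}(n)}_{\rho_1,\rho_2,\rho_3}$ on $\mathfrak{A}(n)$ is: for $x\ne y$, $S(x,y)=\rho_1/n$ if $y=\mathsf{Ch_{init}}(x,q)$ for some $q$; $\rho_2/n$ if $y=\mathsf{Ch_{final}}(x,q)$ for some $q$; $\rho_3/(|\Sigma|n^2)$ if $y=\mathsf{Ch_{trans}}(x,(p,a,q))$ for some $(p,a,q)$; $0$ otherwise; and $S(x,x)=1-\sum_{y\ne x}S(x,y)$. The lazy chain $L=L^{\mathfrak{A}(n)}_{\rho_1,\rho_2,\rho_3}$ is $L(x,y)=\frac12 S(x,y)$ for $x\ne y$ and $L(x,x)=\frac12+\frac12S(x,x)$; its stationary distribution $\pi$ is uniform on $\mathfrak{A}(n)$. The $\varepsilon$-mixing time is $\tau(\varepsilon)=\min\{t:\max_{x\in\mathfrak{A}(n)}\|L^t(x,\cdot)-\pi\|_{TV}\le\varepsilon\}$,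 where $\|\cdot\|_{TV}$ is total variation distance. $\log$ denotes the natural logarithm. *)

(* Defs.v *)
From HB Require Import structures.
From mathcomp Require Import all_boot all_order all_algebra.
From mathcomp Require Import reals exp.
Set Implicit Arguments. Unset Strict Implicit. Unset Printing Implicit Defensive.
Import Order.TTheory GRing.Theory Num.Theory.
Local Open Scope ring_scope.

(* An NFA with state set Q = 'I_n (representing {1,...,n}) over alphabet Sigma
   is the triple (I, F, Delta). *)
Definition nfa (Sigma : finType) (n : nat) : finType :=
  ({set 'I_n} * {set 'I_n} * {set ('I_n * Sigma * 'I_n)})%type.

Definition nfa_init {Sigma : finType} {n : nat} (A : nfa Sigma n) : {set 'I_n} := A.1.1.
Definition nfa_final {Sigma : finType} {n : nat} (A : nfa Sigma n) : {set 'I_n} := A.1.2.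
Definition nfa_trans {Sigma : finType} {n : nat} (A : nfa Sigma n)
  : {set ('I_n * Sigma * 'I_n)} := A.2.

Definition toggle {T : finType} (X : {set T}) (x : T) : {set T} :=
  if x \in X then X :\ x else x |: X.

Definition Ch_init {Sigma : finType} {n : nat} (A : nfa Sigma n) (q : 'I_n) : nfa Sigma n :=
  (toggle (nfa_init A) q, nfa_final A, nfa_trans A).
Definition Ch_final {Sigma : finType} {n : nat} (A : nfa Sigma n) (q : 'I_n) : nfa Sigma n :=
  (nfa_init A, toggle (nfa_final A) q, nfa_trans A).
Definition Ch_trans {Sigma : finType} {n : nat} (A : nfa Sigma n)
  (e : 'I_n * Sigma * 'I_n) : nfa Sigma n :=
  (nfa_init A, nfa_final A, toggle (nfa_trans A) e).

Section Chain.
Variables (R : realType) (Sigma : finType) (n : nat) (rho1 rho2 rho3 : R).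
Local Notation A := (nfa Sigma n).

Definition S_off (x y : A) : R :=
  if [exists q, y == Ch_init x q] then rho1 / n%:R
  else if [exists q, y == Ch_final x q] then rho2 / n%:R
  else if [exists e, y == Ch_trans x e] then rho3 / (#|Sigma|%:R * n%:R ^+ 2)
  else 0.

Definition S_mat (x y : A) : R :=
  if x == y then 1 - \sum_(z : A | z != x) S_off x z else S_off x y.

Definition L_mat (x y : A) : R :=
  if x == y then 1/2 + 1/2 * S_mat x x else 1/2 * S_mat x y.

Fixpoint L_pow (t : nat) (x y : A) : R :=
  match t with
  | 0%N => (x == y)%:R
  | t'.+1 => \sum_(z : A) L_pow t' x z * L_mat z y
  end.

Definition pi_unif (y : A) : R := 1 / #|A|%:R.

Definition tv_dist (mu nu : A -> R) : R := 1/2 * \sum_(y : A) `|mu y - nu y|.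

Definition mixing_cond (eps : R) (t : nat) : bool :=
  \big[Num.max/0]_(x : A) tv_dist (L_pow t x) pi_unif <= eps.

End Chain.

(* Main.v *)
Require Import Defs.
From HB Require Import structures.
From mathcomp Require Import all_boot all_order all_algebra.
From mathcomp Require Import reals exp sequences.
From mathcomp Require Import ring lra.
Set Implicit Arguments. Unset Strict Implicit. Unset Printing Implicit Defensive.
Import Order.TTheory GRing.Theory Num.Theory.
Local Open Scope ring_scope.

Lemma toggle_in (T : finType) (X : {set T}) x y :
  (y \in toggle X x) = (if y == x then x \notin X else y \in X).
Proof.
rewrite /toggle; case: (boolP (x \in X)) => Hx; rewrite !inE;
case: eqP => [->|] //=; by rewrite ?Hx ?eqxx.
Qed.

Section Coords.
Variables (Sigma : finType) (n : nat).
Local Notation A := (nfa Sigma n).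
Definition C : finType := (('I_n + 'I_n) + ('I_n * Sigma * 'I_n))%type.

Definition memc (z : A) (c : C) : bool :=
  match c with
  | inl (inl q) => q \in nfa_init z
  | inl (inr q) => q \in nfa_final z
  | inr e => e \in nfa_trans z
  end.

Definition flip (z : A) (c : C) : A :=
  match c with
  | inl (inl q) => Ch_init z q
  | inl (inr q) => Ch_final z q
  | inr e => Ch_trans z e
  end.

Lemma memc_flip z c d : memc (flip z c) d = if d == c then ~~ memc z c else memc z d.
Proof.
case: c => [[q|q]|e]; case: d => [[q'|q']|e'] //=; rewrite toggle_in //.
Qed.

Lemma memc_ext y z : (forall c, memc y c = memc z c) -> y = z.
Proof.
case: y => [[I1 F1] D1]; case: z => [[I2 F2] D2] H.
have e1 : I1 = I2 by apply/setP => q; exact: (H (inl (inl q))).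
have e2 : F1 = F2 by apply/setP => q; exact: (H (inl (inr q))).
have e3 : D1 = D2 by apply/setP => q; exact: (H (inr q)).
by rewrite e1 e2 e3.
Qed.

Lemma flipK z c : flip (flip z c) c = z.
Proof.
apply: memc_ext => d; rewrite !memc_flip eqxx.
by case: eqP => [->|]; rewrite ?negbK.
Qed.

Lemma flip_neq z c : flip z c != z.
Proof.
apply/eqP => H; have := memc_flip z c c; rewrite H eqxx.
by case: (memc z c).
Qed.

Lemma flip_inj z c d : flip z c = flip z d -> c = d.
Proof.
move=> H; apply/eqP; apply/negPn/negP => ncd.
have := memc_flip z c c; rewrite H memc_flip eqxx (negbTE ncd).
by case: (memc z c).
Qed.

Lemma flip_sym y z c : (y == flip z c) = (z == flip y c).
Proof.
by apply/eqP/eqP => [->|->]; rewrite flipK.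
Qed.

Lemma flip_inj_fun c : injective (fun z => flip z c).
Proof. by move=> y z H; rewrite -(flipK y c) H flipK. Qed.

End Coords.

Section Chain2.
Variables (R : realType) (Sigma : finType) (n : nat) (rho1 rho2 rho3 : R).
Local Notation A := (nfa Sigma n).
Local Notation C := (C Sigma n).

Definition p (c : C) : R :=
  match c with
  | inl (inl _) => rho1 / n%:R
  | inl (inr _) => rho2 / n%:R
  | inr _ => rho3 / (#|Sigma|%:R * n%:R ^+ 2)
  end.

Lemma sum_ind_eq (T : finType) (P : pred T) (a : T) :
  \sum_(V | P V) (V == a)%:R = (P a)%:R :> R.
Proof.
rewrite big_mkcond (bigD1 a) //= eqxx big1 ?addr0; first by case: (P a).
by move=> V /negbTE ->; case: (P V).
Qed.

Lemma sum_ind_eqM (T : finType) (a : T) (f : T -> R) :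
  \sum_V (V == a)%:R * f V = f a.
Proof.
rewrite (bigD1 a) //= eqxx mul1r big1 ?addr0 //.
by move=> V /negbTE ->; rewrite mul0r.
Qed.

End Chain2.

Section Chain2.
Variables (R : realType) (Sigma : finType) (n : nat) (rho1 rho2 rho3 : R).
Local Notation A := (nfa Sigma n).
Local Notation C := (C Sigma n).
Local Notation p := (@p R Sigma n rho1 rho2 rho3).

Lemma S_off_E (z y : A) :
  S_off rho1 rho2 rho3 z y = \sum_c p c * (y == flip z c)%:R.
Proof.
have uniq c c0 : y == flip z c -> y = flip z c0 -> c = c0.
  by move=> /eqP -> /flip_inj.
case: (pickP (fun c => y == flip z c)) => [c0 Hc0 | Hn].
  rewrite (bigD1 c0) //= Hc0 mulr1 big1 ?addr0; last first.
    move=> c nc; case: eqP => [Hy|]; last by rewrite mulr0.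
    by rewrite (uniq c c0 (introT eqP Hy) (eqP Hc0)) eqxx in nc.
  rewrite /S_off; case: c0 Hc0 => [[q|q]|e] Hc0.
  - have Hx : [exists q, y == Ch_init z q] by apply/existsP; exists q.
    by case: ifP => [_|/negbT/negP H]; [|case: (H Hx)].
  - case: ifP => [/existsP [q1 Hq1]|_].
      by have := uniq (inl (inl q1)) _ Hq1 (eqP Hc0).
    have Hx : [exists q, y == Ch_final z q] by apply/existsP; exists q.
    by case: ifP => [_|/negbT/negP H]; [|case: (H Hx)].
  - case: ifP => [/existsP [q1 Hq1]|_].
      by have := uniq (inl (inl q1)) _ Hq1 (eqP Hc0).
    case: ifP => [/existsP [q1 Hq1]|_].
      by have := uniq (inl (inr q1)) _ Hq1 (eqP Hc0).
    have Hx : [exists q, y == Ch_trans z q] by apply/existsP; exists e.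
    by case: ifP => [_|/negbT/negP H]; [|case: (H Hx)].
rewrite big1; last by move=> c _; rewrite Hn mulr0.
rewrite /S_off.
case: ifP => [/existsP [q1 Hq1]|_]; first by have := Hn (inl (inl q1)); rewrite /= Hq1.
case: ifP => [/existsP [q1 Hq1]|_]; first by have := Hn (inl (inr q1)); rewrite /= Hq1.
case: ifP => [/existsP [q1 Hq1]|_] //; by have := Hn (inr q1); rewrite /= Hq1.
Qed.

Definition P := \sum_(c : C) p c.

Lemma sum_S_off (z : A) :
  \sum_(w : A | w != z) S_off rho1 rho2 rho3 z w = P.
Proof.
rewrite /P (eq_bigr _ (fun w _ => S_off_E z w)) exchange_big /=.
apply: eq_bigr => c _.
by rewrite -big_distrr /= sum_ind_eq flip_neq mulr1.
Qed.

Lemma L_mat_E (z y : A) :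
  @L_mat R Sigma n rho1 rho2 rho3 z y =
  (z == y)%:R * (1 - P / 2) + \sum_c (p c / 2) * (z == flip y c)%:R.
Proof.
rewrite /L_mat /S_mat sum_S_off.
case: eqP => [<-|nzy].
  rewrite big1 ?addr0; last by move=> c _; rewrite eq_sym (negbTE (flip_neq _ _)) mulr0.
  rewrite eqxx (_ : (true%:R : R) = 1) //; by field.
rewrite mul0r add0r S_off_E mulr_sumr; apply: eq_bigr => c _.
rewrite flip_sym; ring.
Qed.
End Chain2.

Section Nu.
Variables (R : realType) (Sigma : finType) (n : nat) (rho1 rho2 rho3 : R).
Local Notation A := (nfa Sigma n).
Local Notation C := (C Sigma n).
Local Notation p := (@p R Sigma n rho1 rho2 rho3).
Local Notation P := (@P R Sigma n rho1 rho2 rho3).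
Variable x : A.

Definition agree (U : {set C}) (y : A) : bool :=
  [forall c, (c \notin U) ==> (memc y c == memc x c)].
Definition nu (U : {set C}) (y : A) : R := (agree U y)%:R / 2 ^+ #|U|.

Lemma agree_flip_in (U : {set C}) (y : A) (c : C) : c \in U -> agree U (flip y c) = agree U y.
Proof.
move=> cU; apply: eq_forallb => d; rewrite memc_flip.
by case: (eqVneq d c) => [->|]; rewrite ?cU.

Qed.

Lemma agree_split (U : {set C}) (y : A) (c : C) : c \notin U ->
  agree U y = agree (c |: U) y && (memc y c == memc x c).
Proof.
move=> cU; apply/forallP/andP => [H|[/forallP H1 H2] d].
  split; last by have := H c; rewrite cU.
  apply/forallP => d; apply/implyP; rewrite !inE negb_or => /andP [_ dU].
  by have := H d; rewrite dU.
apply/implyP => dU; case: (eqVneq d c) => [->//|ndc].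
by have := H1 d; rewrite !inE negb_or ndc dU.
Qed.

Lemma agree_add (U : {set C}) (y : A) (c : C) : c \notin U ->
  (agree (c |: U) y)%:R = (agree U y)%:R + (agree U (flip y c))%:R :> R.
Proof.
move=> cU; rewrite (agree_split y cU) (agree_split (flip y c) cU).
rewrite agree_flip_in ?setU11 // memc_flip eqxx.
by case: (agree _ y); case: (memc y c); case: (memc x c); rewrite /= ?add0r ?addr0.
Qed.

Lemma nu_add (U : {set C}) (y : A) (c : C) : c \notin U -> nu (c |: U) y = (nu U y + nu U (flip y c)) / 2.
Proof.
move=> cU; rewrite /nu agree_add // cardsU1 cU exprS /=.
move: ((agree U y)%:R) ((agree U (flip y c))%:R) => a b.
rewrite -mulrDl invfM; ring.
Qed.

Lemma nu_flip_in (U : {set C}) (y : A) (c : C) : c \in U -> nu U (flip y c) = nu U y.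
Proof. by move=> cU; rewrite /nu agree_flip_in. Qed.

Lemma agree0 (y : A) : agree set0 y = (x == y).
Proof.
apply/forallP/eqP => [H|<- c]; last by rewrite eqxx implybT.
by apply: memc_ext => c; have := H c; rewrite inE /= => /eqP ->.
Qed.

Lemma sum_agree (U : {set C}) : \sum_y (agree U y)%:R = 2 ^+ #|U| :> R.
Proof.
move Hk : #|U| => k; elim: k U Hk => [|k IH] U Hk.
  move/eqP: Hk; rewrite cards_eq0 => /eqP ->.
  rewrite (eq_bigr (fun y => (y == x)%:R)); last by move=> y _; rewrite agree0 eq_sym.
  by rewrite sum_ind_eq.
have : (0 < #|U|)%N by rewrite Hk.
rewrite card_gt0 => /set0Pn [c cU].
have cU' : c \notin U :\ c by rewrite !inE eqxx.
rewrite -(setD1K cU) (eq_bigr _ (fun y _ => agree_add y cU')) big_split /=.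
have E : \sum_y (agree (U :\ c) (flip y c))%:R = \sum_y (agree (U :\ c) y)%:R :> R.
  by rewrite [RHS](reindex_inj (@flip_inj_fun Sigma n c)).
have Hk' : #|U :\ c| = k by move: Hk; rewrite (cardsD1 c U) cU add1n => -[].
by rewrite E IH // exprS mulr_natl mulr2n.
Qed.

Lemma sum_nu (U : {set C}) : \sum_y nu U y = 1.
Proof.
rewrite /nu -mulr_suml sum_agree divff // expf_neq0 // pnatr_eq0 //.
Qed.

Lemma agreeT (y : A) : agree setT y.
Proof. by apply/forallP => c; rewrite inE. Qed.

Lemma card_A : #|A|%:R = 2 ^+ #|C| :> R.
Proof.
have := sum_agree setT; rewrite cardsT (eq_bigr (fun _ => 1)); last by move=> y _; rewrite agreeT.
by rewrite sumr_const => <-.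
Qed.

Lemma nuT (y : A) : nu setT y = pi_unif R y.
Proof. by rewrite /nu /pi_unif agreeT cardsT card_A. Qed.


End Nu.

Section Step.
Variables (R : realType) (Sigma : finType) (n : nat) (rho1 rho2 rho3 : R).
Local Notation A := (nfa Sigma n).
Local Notation C := (C Sigma n).
Local Notation p := (@p R Sigma n rho1 rho2 rho3).
Local Notation P := (@P R Sigma n rho1 rho2 rho3).
Local Notation L := (@L_mat R Sigma n rho1 rho2 rho3).
Variable x : A.
Local Notation nu := (@nu R Sigma n x).

Lemma alg_step (a SU SN T : R) :
  a * (1 - (SU + SN) / 2) + (SU / 2 * a + (T - SN / 2 * a)) = (1 - SN) * a + T.
Proof. by field. Qed.

Lemma nu_step (U : {set C}) (y : A) :
  \sum_z nu U z * L z y =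
  (1 - \sum_(i | i \notin U) p i) * nu U y + \sum_(i | i \notin U) p i * nu (i |: U) y.
Proof.
have E1 : \sum_z nu U z * L z y = nu U y * (1 - P / 2) + \sum_c p c / 2 * nu U (flip y c).
  under eq_bigr => z _ do rewrite L_mat_E mulrDr mulr_sumr.
  rewrite big_split /=; congr (_ + _).
    under eq_bigr => z _ do rewrite mulrCA.
    by rewrite sum_ind_eqM.
  rewrite exchange_big /=; apply: eq_bigr => c _.
  under eq_bigr => z _ do rewrite mulrCA [nu U _ * _]mulrC.
  by rewrite -mulr_sumr sum_ind_eqM.
rewrite E1 (bigID (fun c => c \in U)) /=.
rewrite (eq_bigr (fun c => p c / 2 * nu U y)); last by move=> c cU; rewrite nu_flip_in.
rewrite [in X in _ + (_ + X)](eq_bigr (fun c => p c * nu (c |: U) y - p c / 2 * nu U y)); last first.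
  move=> c cU; rewrite nu_add //.
  move: (nu U y) (nu U (flip y c)) => a b; by field.
rewrite sumrB -!mulr_suml.
rewrite /P (bigID (fun c => c \in U)) /= !mulr_suml.
rewrite -!mulr_suml.
by rewrite alg_step.
Qed.

End Step.

Section Mix.
Variables (R : realType) (Sigma : finType) (n : nat) (rho1 rho2 rho3 : R).
Local Notation A := (nfa Sigma n).
Local Notation C := (C Sigma n).
Local Notation p := (@p R Sigma n rho1 rho2 rho3).
Local Notation P := (@P R Sigma n rho1 rho2 rho3).
Local Notation L := (@L_mat R Sigma n rho1 rho2 rho3).
Local Notation Lp := (@L_pow R Sigma n rho1 rho2 rho3).
Variable x : A.
Local Notation nu := (@nu R Sigma n x).

Lemma sum_ind_eq1 (T : finType) (a : T) : \sum_V (V == a)%:R = 1 :> R.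
Proof.
rewrite (bigD1 a) //= eqxx big1 ?addr0 //.
by move=> V /negbTE ->.
Qed.

Definition SU (U : {set C}) := \sum_(i | i \notin U) p i.

Definition T (U V : {set C}) : R :=
  (V == U)%:R * (1 - SU U) + \sum_(i | i \notin U) p i * (V == i |: U)%:R.

Lemma SU_le (p_ge0 : forall c, 0 <= p c) (U : {set C}) : SU U <= P.
Proof.
rewrite /P (bigID (fun c => c \notin U)) /= -/(SU U) lerDl.
by apply: sumr_ge0 => c _.
Qed.

Lemma p_le (p_ge0 : forall c, 0 <= p c) (j : C) : p j <= P.
Proof.
rewrite /P (bigD1 j) //= lerDl.
by apply: sumr_ge0 => c _.
Qed.

Lemma T_ge0 (p_ge0 : forall c, 0 <= p c) (P_le1 : P <= 1) (U V : {set C}) : 0 <= T U V.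
Proof.
apply: addr_ge0.
  apply: mulr_ge0; first exact: ler0n.
  by rewrite subr_ge0; apply: le_trans (SU_le p_ge0 U) P_le1.
by apply: sumr_ge0 => i _; apply: mulr_ge0.
Qed.

Lemma T_sum (U : {set C}) : \sum_V T U V = 1.
Proof.
rewrite /T big_split /=.
rewrite (eq_bigr (fun V => (V == U)%:R * (1 - SU U))) // sum_ind_eqM.
rewrite exchange_big /=.
rewrite (eq_bigr (fun i => p i)); first by rewrite -/(SU U) subrK.
by move=> i _; rewrite -mulr_sumr sum_ind_eq1 mulr1.
Qed.

Lemma T_sumj (U : {set C}) (j : C) : \sum_(V : {set C} | j \notin V) T U V = (j \notin U)%:R * (1 - p j).
Proof.
rewrite /T big_split /=.
rewrite (eq_bigr (fun V => (V == U)%:R * (1 - SU U))) //.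
rewrite -big_distrl /= sum_ind_eq.
rewrite exchange_big /=.
under eq_bigr => i _ do rewrite -mulr_sumr sum_ind_eq !inE negb_or.
case: (boolP (j \in U)) => jU /=.
  rewrite mul0r add0r mul0r big1 // => i iU.
  by rewrite andbF mulr0.
rewrite mul1r.
under eq_bigr => i _ do rewrite andbT.
rewrite /SU [X in 1 - X](bigD1 j) // [X in _ + X](bigD1 j) //= eqxx mulr0 add0r.
rewrite [X in _ + X](eq_bigr (fun i => p i)); last first.
  by move=> i /andP [_ nij]; rewrite eq_sym nij mulr1.
by rewrite mul1r opprD addrA subrK.
Qed.

End Mix.

Section Mix2.
Variables (R : realType) (Sigma : finType) (n : nat) (rho1 rho2 rho3 : R).
Local Notation A := (nfa Sigma n).
Local Notation C := (C Sigma n).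
Local Notation p := (@p R Sigma n rho1 rho2 rho3).
Local Notation P := (@P R Sigma n rho1 rho2 rho3).
Local Notation L := (@L_mat R Sigma n rho1 rho2 rho3).
Local Notation Lp := (@L_pow R Sigma n rho1 rho2 rho3).
Local Notation T := (@T R Sigma n rho1 rho2 rho3).
Local Notation SU := (@SU R Sigma n rho1 rho2 rho3).
Variable x : A.
Local Notation nu := (@nu R Sigma n x).

Lemma T_nu (U : {set C}) (y : A) :
  \sum_V T U V * nu V y = (1 - SU U) * nu U y + \sum_(i | i \notin U) p i * nu (i |: U) y.
Proof.
rewrite /T.
under eq_bigr => V _ do rewrite mulrDl mulr_suml.
rewrite big_split /=; congr (_ + _).
  under eq_bigr => V _ do rewrite -mulrA.
  by rewrite sum_ind_eqM mulrC.
rewrite exchange_big /=; apply: eq_bigr => i _.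
under eq_bigr => V _ do rewrite -mulrA.
by rewrite -mulr_sumr sum_ind_eqM.
Qed.

Lemma mixture (p_ge0 : forall c, 0 <= p c) (P_le1 : P <= 1) (t : nat) :
  exists w : {set C} -> R,
    [/\ forall U, 0 <= w U, \sum_U w U = 1,
        forall j, \sum_(U : {set C} | j \notin U) w U <= (1 - p j) ^+ t &
        forall y, Lp t x y = \sum_U w U * nu U y].
Proof.
elim: t => [|t [w [w0 w1 wj wL]]].
  exists (fun U => (U == set0)%:R); split.
  - by move=> U; exact: ler0n.
  - exact: sum_ind_eq1.
  - by move=> j; rewrite sum_ind_eq inE expr0.
  - move=> y; rewrite sum_ind_eqM /= /nu agree0 cards0 expr0 divr1.
    by [].
exists (fun V => \sum_U w U * T U V); split.
- move=> V; apply: sumr_ge0 => U _; apply: mulr_ge0 => //.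
  exact: T_ge0.
- rewrite exchange_big /=.
  under eq_bigr => U _ do rewrite -mulr_sumr T_sum mulr1.
  exact: w1.
- move=> j; rewrite exchange_big /=.
  under eq_bigr => U _ do rewrite -mulr_sumr T_sumj.
  have pj1 : 0 <= 1 - p j by rewrite subr_ge0; apply: le_trans (p_le p_ge0 j) P_le1.
  rewrite (eq_bigr (fun U => (1 - p j) * (w U * (j \notin U)%:R))); last first.
    by move=> U _; rewrite mulrA mulrC.
  rewrite -mulr_sumr exprS ler_wpM2l //.
  apply: le_trans (wj j); rewrite [leRHS]big_mkcond /=.
  by apply: ler_sum => U _; case: (j \notin U); rewrite ?mulr1 ?mulr0.
- move=> y /=.
  rewrite (eq_bigr (fun z => \sum_U w U * (nu U z * L z y))); last first.
    by move=> z _; rewrite wL mulr_suml; apply: eq_bigr => U _; rewrite mulrA.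
  rewrite exchange_big /=.
  under eq_bigr => U _ do rewrite -mulr_sumr nu_step.
  under [RHS]eq_bigr => V _ do rewrite mulr_suml.
  rewrite [RHS]exchange_big /=; apply: eq_bigr => U _.
  under [RHS]eq_bigr => V _ do rewrite -mulrA.
  by rewrite -mulr_sumr T_nu.
Qed.

End Mix2.

Section TV.
Variables (R : realType) (Sigma : finType) (n : nat) (rho1 rho2 rho3 : R).
Local Notation A := (nfa Sigma n).
Local Notation C := (C Sigma n).
Local Notation p := (@p R Sigma n rho1 rho2 rho3).
Local Notation P := (@P R Sigma n rho1 rho2 rho3).
Local Notation Lp := (@L_pow R Sigma n rho1 rho2 rho3).
Variable x : A.
Local Notation nu := (@nu R Sigma n x).
Local Notation pi := (@pi_unif R Sigma n).

Lemma nu_ge0 U y : 0 <= nu U y.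
Proof. by rewrite /nu divr_ge0 // exprn_ge0. Qed.

Lemma pi_ge0 y : 0 <= pi y.
Proof. by rewrite /pi_unif divr_ge0. Qed.

Lemma sum_pi : \sum_y pi y = 1.
Proof.
rewrite /pi_unif sumr_const -[_ *+ _]mulr_natr div1r mulVf //.
by rewrite pnatr_eq0 -lt0n; apply/card_gt0P; exists x.
Qed.

Lemma notT_le (U : {set C}) : (U != setT)%:R <= \sum_j (j \notin U)%:R :> R.
Proof.
case: (pickP (fun j => j \notin U)) => [j jU|none].
  rewrite (bigD1 j) //= jU; case: (U != setT) => /=.
    by rewrite lerDl; apply: sumr_ge0 => i _; exact: ler0n.
  by apply: addr_ge0 => //; apply: sumr_ge0 => i _; exact: ler0n.
have -> : U = setT by apply/setP => j; rewrite inE; have := none j; rewrite /= => /negbFE.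
by rewrite eqxx /=; apply: sumr_ge0 => i _; exact: ler0n.
Qed.

Lemma tv_bound (p_ge0 : forall c, 0 <= p c) (P_le1 : P <= 1) t :
  tv_dist (Lp t x) pi <= \sum_j (1 - p j) ^+ t.
Proof.
have [w [w0 w1 wj wL]] := mixture x p_ge0 P_le1 t.
have step1 y : `|Lp t x y - pi y| <= \sum_U w U * ((U != setT)%:R * (nu U y + pi y)).
  have -> : Lp t x y - pi y = \sum_U w U * (nu U y - pi y).
    under eq_bigr => U _ do rewrite mulrBr.
    by rewrite sumrB -mulr_suml w1 mul1r wL.
  apply: le_trans (ler_norm_sum _ _ _) _; apply: ler_sum => U _.
  rewrite normrM ger0_norm //; apply: ler_wpM2l => //.
  case: (eqVneq U setT) => [->|_] /=.
    by rewrite nuT subrr normr0 mul0r.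
  rewrite /= mulr1n mul1r; apply: le_trans (ler_normB _ _) _.
  by rewrite !ger0_norm ?nu_ge0 ?pi_ge0.
have step2 : tv_dist (Lp t x) pi <= \sum_U w U * (U != setT)%:R.
  rewrite /tv_dist; apply: le_trans (ler_wpM2l _ (ler_sum _ (fun y _ => step1 y))) _.
    by rewrite divr_ge0.
  rewrite exchange_big /=.
  rewrite (eq_bigr (fun U => w U * (U != setT)%:R * 2)); last first.
    move=> U _; rewrite -mulr_sumr -mulr_sumr big_split /= sum_nu sum_pi.
    by rewrite mulrA.
  have E2 (S : R) : 1 / 2 * (S * 2) = S by field.
  by rewrite -mulr_suml E2.
apply: le_trans step2 _.
apply: le_trans (ler_sum _ (fun U _ => ler_wpM2l (w0 U) (notT_le U))) _.
under eq_bigr => U _ do rewrite mulr_sumr.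
rewrite exchange_big /=; apply: ler_sum => j _.
apply: le_trans (wj j); rewrite [leRHS]big_mkcond /=.
by apply: ler_sum => U _; case: (j \notin U); rewrite ?mulr1 ?mulr0.
Qed.

End TV.

Lemma numeric (R : realType) (m rho e : R) (t : nat) :
  1 <= m -> 0 < rho -> rho <= 1 -> 0 < e ->
  m / rho * (ln m + ln (1 / (rho * e))) <= t%:R ->
  m * (1 - rho / m) ^+ t <= rho * e.
Proof.
move=> m1 rho0 rho1 e0 Ht.
have m0 : 0 < m by apply: lt_le_trans m1; exact: ltr01.
set a := rho / m.
have a0 : 0 < a by rewrite /a divr_gt0.
have a1 : 0 <= 1 - a.
  by rewrite subr_ge0 /a ler_pdivrMr // mul1r; apply: le_trans m1.
set q := 1 / (rho * e).
have q0 : 0 < q by rewrite /q divr_gt0 // mulr_gt0.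
have H1 : (1 - a) ^+ t <= expR (- a) ^+ t.
  apply: lerXn2r => //; first by rewrite nnegrE expR_ge0.
  by have := expR_ge1Dx (- a).
have H2 : expR (- a) ^+ t <= expR (- (ln m + ln q)).
  rewrite -expRM_natl ler_expR mulrN lerN2.
  have : a * (m / rho * (ln m + ln q)) <= a * t%:R by rewrite ler_pM2l.
  rewrite mulrA /a mulrA -(mulrA rho) mulVf ?gt_eqF // mulr1 mulfV ?gt_eqF // mul1r.
  by rewrite mulrC.
have H3 : expR (- (ln m + ln q)) = (m * q)^-1.
  by rewrite expRN expRD !lnK // posrE.
apply: le_trans (ler_wpM2l (ltW m0) (le_trans H1 H2)) _.
rewrite H3 invfM mulrA mulfV ?gt_eqF // mul1r /q.
by rewrite div1r invrK.
Qed.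

Section Final.
Variables (R : realType) (Sigma : finType) (n : nat) (rho1 rho2 rho3 : R).
Local Notation C := (C Sigma n).
Local Notation p := (@p R Sigma n rho1 rho2 rho3).

Lemma sum_C (F : C -> R) (f1 f2 f3 : R) :
  (forall q, F (inl (inl q)) = f1) -> (forall q, F (inl (inr q)) = f2) ->
  (forall e, F (inr e) = f3) ->
  \sum_c F c = n%:R * f1 + n%:R * f2 + (#|Sigma|%:R * n%:R ^+ 2) * f3.
Proof.
move=> H1 H2 H3.
rewrite big_sumType /= big_sumType /=.
rewrite (eq_bigr _ (fun q _ => H1 q)) (eq_bigr _ (fun q _ => H2 q)) (eq_bigr _ (fun q _ => H3 q)).
rewrite !sumr_const.
rewrite !card_ord card_prod card_prod !card_ord -[f1 *+ n]mulr_natl -[f2 *+ n]mulr_natl -[f3 *+ _]mulr_natl !natrM.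
by rewrite expr2 mulrA [n%:R * #|Sigma|%:R]mulrC.
Qed.

End Final.

Lemma mul_div (R : realType) (a b : R) : b != 0 -> b * (a / b) = a.
Proof. by move=> b0; rewrite mulrC divfK. Qed.

Lemma bound_ge0 (R : realType) (m rho eps : R) : 1 <= m -> 0 < rho -> rho <= 1 ->
  0 < eps -> eps < 1 -> 0 <= m / rho * (ln m + ln (1 / (rho * eps))).
Proof.
move=> m1 r0 r1 e0 e1.
apply: mulr_ge0; first by rewrite divr_ge0 // ?ltW //; exact: lt_le_trans ltr01 m1.
apply: addr_ge0; first exact: ln_ge0.
apply: ln_ge0; rewrite div1r invf_ge1 ?mulr_gt0 //.
by apply: mulr_ile1; rewrite ?r1 // ltW.
Qed.

Unset Implicit Arguments.
Theorem proposition2 (R : realType) (Sigma : finType) (n : nat)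
  (rho1 rho2 rho3 eps : R) :
  (1 < #|Sigma|)%N -> (1 <= n)%N ->
  0 < rho1 -> 0 < rho2 -> 0 < rho3 -> rho1 + rho2 + rho3 <= 1 ->
  0 < eps -> eps < 1 ->
  exists H : (exists t, mixing_cond Sigma n rho1 rho2 rho3 eps t),
    ((ex_minn H)%:Z <=
      Num.max (Num.max
        (Num.ceil (n%:R / rho1 * (ln (n%:R : R) + ln (1 / (rho1 * eps)))))
        (Num.ceil (n%:R / rho2 * (ln (n%:R : R) + ln (1 / (rho2 * eps))))))
        (Num.ceil ((#|Sigma|%:R * n%:R ^+ 2) / rho3 *
            (ln (#|Sigma|%:R * n%:R ^+ 2 : R) + ln (1 / (rho3 * eps))))))%R.
Proof.
move=> HS Hn r1 r2 r3 Hsum e0 e1.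
have n1 : (1 : R) <= n%:R by rewrite ler1n.
have S1 : (1 : R) <= #|Sigma|%:R by rewrite ler1n ltnW.
have m3 : (1 : R) <= #|Sigma|%:R * n%:R ^+ 2.
  by rewrite -[leLHS]mulr1 ler_pM // exprn_ege1.
have n0 : (n%:R : R) != 0 by rewrite gt_eqF //; apply: lt_le_trans n1; exact: ltr01.
have m30 : (#|Sigma|%:R * n%:R ^+ 2 : R) != 0.
  by rewrite gt_eqF //; apply: lt_le_trans m3; exact: ltr01.
have r1' : rho1 <= 1 by lra.
have r2' : rho2 <= 1 by lra.
have r3' : rho3 <= 1 by lra.
have p_ge0 : forall c, 0 <= @p R Sigma n rho1 rho2 rho3 c.
  case=> [[q|q]|q] /=; apply: divr_ge0.
  - exact: ltW.
  - exact: ler0n.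
  - exact: ltW.
  - exact: ler0n.
  - exact: ltW.
  - exact: le_trans ler01 m3.
have P_le1 : @P R Sigma n rho1 rho2 rho3 <= 1.
  rewrite /P (@sum_C R Sigma n _ (rho1 / n%:R) (rho2 / n%:R)
     (rho3 / (#|Sigma|%:R * n%:R ^+ 2))) // !mul_div //.
set b1 := n%:R / rho1 * _.
set b2 := n%:R / rho2 * _.
set b3 := (#|Sigma|%:R * n%:R ^+ 2) / rho3 * _.
set M := Num.max _ _.
have b1_0 : 0 <= b1 by apply: bound_ge0.
have b2_0 : 0 <= b2 by apply: bound_ge0.
have b3_0 : 0 <= b3 by apply: bound_ge0.
have c1 : Num.ceil b1 <= M by rewrite /M !le_max lexx.
have c2 : Num.ceil b2 <= M by rewrite /M !le_max lexx orbT.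
have c3 : Num.ceil b3 <= M by rewrite /M !le_max lexx orbT.
have M0 : 0 <= M by apply: le_trans c1; rewrite ceil_ge0; apply: lt_le_trans b1_0; rewrite ltrN10.
set t := `|M|%N.
have HM : (t%:Z) = M by rewrite /t gez0_abs.
have bt (b : R) : 0 <= b -> Num.ceil b <= M -> b <= t%:R.
  move=> _ cb; apply: (le_trans (ceil_ge b)).
  have -> : (t%:R : R) = (M%:~R) by rewrite -HM.
  by rewrite ler_int.
have Hmix : mixing_cond Sigma n rho1 rho2 rho3 eps t.
  rewrite /mixing_cond; apply: bigmax_le; first exact: ltW.
  move=> x _; apply: le_trans (tv_bound x p_ge0 P_le1 t) _.
  rewrite (@sum_C R Sigma n _ ((1 - rho1 / n%:R) ^+ t) ((1 - rho2 / n%:R) ^+ t)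
     ((1 - rho3 / (#|Sigma|%:R * n%:R ^+ 2)) ^+ t)) //.
  apply: le_trans (lerD (lerD (numeric n1 r1 r1' e0 (bt _ b1_0 c1))
                              (numeric n1 r2 r2' e0 (bt _ b2_0 c2)))
                        (numeric m3 r3 r3' e0 (bt _ b3_0 c3))) _.
  by rewrite -!mulrDl ler_piMl // ltW.
exists (ex_intro _ t Hmix).
case: ex_minnP => m _ Hmin.
by rewrite -HM lez_nat; apply: Hmin.
Qed.
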